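(* Let $X_1$ be a random variable with $\mathbb EX_1=0$, $\operatorname{Var}X_1=1$, such that $\varphi(t)=\log\mathbb Ee^{tX_1}<\infty$ for all $t\geq-\sigma_0$ for some $\sigma_0>0$, and let $I(s)=\sup_{t\geq0}(st-\varphi(t))$, $s\geq0$. Then: (i) the condition ''for every $\varepsilon>0$, $\sup_{t\geq\varepsilon}\frac{\varphi(t)}{t^2/2}<1$'' is equivalent to the condition ''for every $\varepsilon>0$, $\inf_{s\geq\varepsilon}\frac{I(s)}{s^2/2}>1$''; (ii) for $q\in\{3,4,\ldots\}$ and $\kappa>0$, the condition $\varphi(t)=\frac{t^2}2-\kappa t^q+o(t^q)$ as $t\downarrow0$ is equivalent to the condition $I(s)=\frac{s^2}2+\kappa s^q+o(s^q)$ as $s\downarrow0$. *)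

(* Defs.v *)
From HB Require Import structures.
From mathcomp Require Import all_boot all_order all_algebra.
From mathcomp Require Import all_classical all_reals all_analysis.
Set Implicit Arguments. Unset Strict Implicit. Unset Printing Implicit Defensive.
Import Order.TTheory GRing.Theory Num.Theory.
Import numFieldNormedType.Exports.
Local Open Scope classical_set_scope.
Local Open Scope ring_scope.

(* cumulant generating function  phi(t) = log E[e^{tX}]  (meaningful where
   the moment generating function 'M_P X t is finite) *)
Definition cgf d (T : measurableType d) (R : realType) (P : probability T R)
  (X : T -> R) (t : R) : R := ln (fine ('M_P X t)).

Definition rate d (T : measurableType d) (R : realType) (P : probability T R)
  (X : T -> R) (s : R) : \bar R :=
  ereal_sup [set ((s * t - cgf P X t)%:E) | t in `[0, +oo[%classic].

(* Main.v *)
Require Import Defs.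
From HB Require Import structures.
From mathcomp Require Import all_boot all_order all_algebra.
From mathcomp Require Import all_classical all_reals all_analysis.
From mathcomp Require Import measurable_realfun ring lra.
Set Implicit Arguments. Unset Strict Implicit. Unset Printing Implicit Defensive.
Import Order.TTheory GRing.Theory Num.Theory.
Import numFieldNormedType.Exports.
Local Open Scope classical_set_scope.
Local Open Scope ring_scope.



Section powlemmas.
Variable R : realType.

Lemma powsmall (n : nat) (e : R) : 0 < e -> exists2 h : R, 0 < h & (1 + h) ^+ n <= 1 + e.
Proof.
elim: n e => [|n IH] e e0; first by exists 1 => //; rewrite expr0; lra.
pose e' := Num.min 1 (e / 3).
have e'0 : 0 < e' by rewrite lt_min ltr01 divr_gt0.
have e'1 : e' <= 1 by rewrite ge_min lexx.
have e'e : e' <= e / 3 by rewrite ge_min lexx orbT.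
have [h0 h00 Hh0] := IH e' e'0.
exists (Num.min h0 e'); first by rewrite lt_min h00 e'0.
have hm0 : 0 <= Num.min h0 e' by rewrite le_min ltW // ltW.
have hle : Num.min h0 e' <= h0 by rewrite ge_min lexx.
have hle' : Num.min h0 e' <= e' by rewrite ge_min lexx orbT.
rewrite exprSr.
have A : (1 + Num.min h0 e') ^+ n <= 1 + e'.
  apply: le_trans Hh0; apply: lerXn2r; rewrite ?nnegrE; lra.
have B : 0 <= (1 + Num.min h0 e') ^+ n by apply: exprn_ge0; lra.
have C : (1 + e') * (1 + e') <= 1 + e by nra.
nra.
Qed.

Lemma lemQ (K e : R) (q : nat) : (2 < q)%N -> 0 < K -> 0 < e ->
  exists2 rho : R, 0 < rho /\ rho <= 1 &
    forall x y, 0 < x < rho -> 0 <= y < rho ->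
      K * y ^+ q - (y - x) ^+ 2 / 2 <= (K + e) * x ^+ q.
Proof.
move=> q2 K0 e0.
have eK : 0 < e / K by apply: divr_gt0.
have [h h0 Hh] := powsmall q eK.
pose c := h / (1 + h).
have c0 : 0 < c by apply: divr_gt0; lra.
have c1 : c < 1 by rewrite ltr_pdivrMr; lra.
pose rho := Num.min 1 (c ^+ 2 / (2 * K)).
have rho0 : 0 < rho.
  rewrite lt_min ltr01 /=; apply: divr_gt0; [exact: exprn_gt0 | apply: mulr_gt0; lra].
have rho1 : rho <= 1 by rewrite ge_min lexx.
have rhoK : K * rho <= c ^+ 2 / 2.
  have : rho <= c ^+ 2 / (2 * K) by rewrite ge_min lexx orbT.
  rewrite ler_pdivlMr ?mulr_gt0 // => H; nra.
exists rho => // x y /andP[x0 xr] /andP[y0 yr].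
have xq0 : 0 <= x ^+ q by apply: exprn_ge0; lra.
have yq0 : 0 <= y ^+ q by apply: exprn_ge0.
have sq0 : 0 <= (y - x) ^+ 2 / 2 by apply: divr_ge0 => //; apply: sqr_ge0.
have [yx|xy] := leP y x.
  have : y ^+ q <= x ^+ q by apply: lerXn2r; rewrite ?nnegrE; lra.
  move=> H; have := ler_wpM2l (ltW K0) H.
  have : 0 <= e * x ^+ q by apply: mulr_ge0; lra.
  rewrite mulrDl; lra.
have [yh|hy] := leP y ((1 + h) * x).
  have : y ^+ q <= (1 + h) ^+ q * x ^+ q.
    have hx0 : 0 <= (1 + h) * x by apply: mulr_ge0; lra.
    by rewrite -exprMn; apply: lerXn2r; rewrite ?nnegrE //; lra.
  have : K * (1 + h) ^+ q <= K + e.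
    have := Hh; rewrite -(ler_pM2l K0) mulrDr mulr1 mulrCA divff ?lt0r_neq0 // mulr1.
    done.
  have : 0 <= (1 + h) ^+ q by apply: exprn_ge0; lra.
  move=> P0 B A.
  have := ler_wpM2l (ltW K0) A; rewrite mulrA => A2.
  have := ler_wpM2r xq0 B => B2.
  lra.
have ycx : y * c <= y - x.
  rewrite /c mulrA ler_pdivrMr; last lra.
  rewrite -subr_ge0.
  have -> : (y - x) * (1 + h) - y * h = y - (1 + h) * x by ring.
  by rewrite subr_ge0 ltW.
have yqle : y ^+ q <= y ^+ 2 * rho.
  have -> : q = (2 + (q - 3).+1)%N by rewrite add2n -addn3 subnK.
  rewrite exprD.
  apply: ler_wpM2l; first by apply: sqr_ge0.
  rewrite exprS; have : y ^+ (q - 3) <= 1 by apply: exprn_ile1; lra.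
  move=> H1; apply: le_trans (ltW yr); rewrite -[X in _ <= X]mulr1.
  by apply: ler_wpM2l.
have : K * y ^+ q <= (y - x) ^+ 2 / 2.
  apply: (le_trans (ler_wpM2l (ltW K0) yqle)).
  have : (y * c) ^+ 2 <= (y - x) ^+ 2.
    by apply: lerXn2r => //; rewrite nnegrE; [apply: mulr_ge0; lra | lra].
  rewrite exprMn => H.
  have -> : K * (y ^+ 2 * rho) = y ^+ 2 * (K * rho) by ring.
  have := ler_wpM2l (sqr_ge0 y) rhoK.
  lra.
have : 0 <= (K + e) * x ^+ q by apply: mulr_ge0; lra.
lra.
Qed.

End powlemmas.

Section abstract.
Variables (R : realType) (f : R -> R).
Hypothesis f0 : f 0 = 0.
Hypothesis fconv : forall a b l : R, 0 <= a -> 0 <= b -> 0 <= l <= 1 ->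
  f (l * a + (1 - l) * b) <= l * f a + (1 - l) * f b.

Definition Irate (s : R) : \bar R :=
  ereal_sup [set ((s * t - f t)%:E) | t in `[0, +oo[%classic].

Lemma I_ge s t : 0 <= t -> ((s * t - f t)%:E <= Irate s)%E.
Proof.
move=> t0; apply: ereal_sup_ubound; exists t => //=.
by rewrite in_itv /= t0.
Qed.

Lemma I_le s (x : \bar R) : (forall t, 0 <= t -> ((s * t - f t)%:E <= x)%E) ->
  (Irate s <= x)%E.
Proof.
move=> H; apply: ge_ereal_sup => _ [t /= + <-].
by rewrite in_itv /= andbT; exact: H.
Qed.

Lemma I_ge0 s : (0 <= Irate s)%E.
Proof. by apply: le_trans (I_ge s (lexx 0)); rewrite mulr0 f0 subrr. Qed.

Lemma I_homo s s' : s' <= s -> (Irate s' <= Irate s)%E.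
Proof.
move=> ss; apply: I_le => t t0; apply: le_trans (I_ge s t0).
by rewrite lee_fin lerD2r ler_wpM2r.
Qed.

Lemma chord u t v : 0 <= u -> u < t -> t < v ->
  (f t - f u) * (v - t) <= (f v - f t) * (t - u).
Proof.
move=> u0 ut tv.
have vu : 0 < v - u by rewrite subr_gt0; apply: lt_trans tv.
pose l := (v - t) / (v - u).
have l0 : 0 <= l <= 1.
  apply/andP; split; first by apply: divr_ge0; lra.
  by rewrite /l ler_pdivrMr // mul1r; lra.
have := @fconv u v l u0 (le_trans u0 (ltW (lt_trans ut tv))) l0.
have -> : l * u + (1 - l) * v = t.
  rewrite /l; field; by rewrite lt0r_neq0.
have -> : 1 - l = (t - u) / (v - u) by rewrite /l; field; rewrite lt0r_neq0.
move=> H.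
have : f t * (v - u) <= (v - t) * f u + (t - u) * f v.
  rewrite -(ler_pM2r vu) in H; apply: le_trans H _.
  rewrite /l mulrDl -!mulrA -!(mulrC (v - u)) !mulrA !divfK ?lt0r_neq0 //.

move=> H2; nra.
Qed.


Lemma ratio a b : 0 < a -> a <= b -> f a * b <= f b * a.
Proof.
move=> a0 ab; have b0 : 0 < b by apply: lt_le_trans ab.
have l0 : 0 <= a / b <= 1.
  apply/andP; split; first by apply: divr_ge0; lra.
  by rewrite ler_pdivrMr // mul1r.
have := @fconv b 0 (a / b) (ltW b0) (lexx 0) l0.
have -> : a / b * b + (1 - a / b) * 0 = a.
  by rewrite mulr0 addr0 divfK // lt0r_neq0.
rewrite f0 mulr0 addr0 => H.
rewrite -(ler_pM2r b0) in H; apply: le_trans H _.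
by rewrite mulrAC divfK ?lt0r_neq0 // mulrC.
Qed.

Lemma subgrad t : 0 < t -> exists s, forall u, 0 <= u -> f t + s * (u - t) <= f u.
Proof.
move=> t0.
pose S := [set (f t - f u) / (t - u) | u in [set u | 0 <= u < t]].
have Sle w : 0 <= w < t -> forall u, t < u ->
    (f t - f w) / (t - w) <= (f u - f t) / (u - t).
  move=> /andP[w0 wt] u tu.
  have tw : 0 < t - w by rewrite subr_gt0.
  have ut' : 0 < u - t by rewrite subr_gt0.
  rewrite ler_pdivrMr // mulrAC ler_pdivlMr //.
  by apply: chord.
have hS : has_sup S.
  split; first by exists ((f t - f 0) / (t - 0)), 0 => //=; rewrite lexx t0.
  exists ((f (t + 1) - f t) / (t + 1 - t)) => _ [w /= wt <-].
  by apply: Sle => //; lra.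
exists (sup S) => u u0.
have [ut|tu|<-] := ltgtP u t.
- have : (f t - f u) / (t - u) <= sup S.
    by apply: sup_upper_bound => //; exists u => //=; rewrite u0 ut.
  rewrite ler_pdivrMr ?subr_gt0 // => H; nra.
- have : sup S <= (f u - f t) / (u - t).
    apply: ge_sup; first by case: hS.
    by move=> _ [w /= wt <-]; apply: Sle.
  rewrite ler_pdivlMr ?subr_gt0 // => H; nra.
- by rewrite subrr mulr0 addr0.
Qed.

Lemma I_subgrad s t : 0 <= t -> (forall u, 0 <= u -> f t + s * (u - t) <= f u) ->
  Irate s = (s * t - f t)%:E.
Proof.
move=> t0 H; apply/eqP; rewrite eq_le I_ge // andbT.
apply: I_le => u u0; rewrite lee_fin; have := H u u0; nra.
Qed.

End abstract.


Section helpers.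
Variable R : realType.

Lemma absE_fin (x : \bar R) (v w : R) : (`|x - v%:E| <= w%:E)%E ->
  exists r, x = r%:E /\ `|r - v| <= w.
Proof.
case: x => [r| |] /=.
- by move=> H; exists r.
- by [].
- by [].
Qed.

Lemma bnds_fin (x : \bar R) (a b : R) : (a%:E <= x)%E -> (x <= b%:E)%E ->
  exists r, x = r%:E /\ a <= r <= b.
Proof.
case: x => [r| |] //=.
by rewrite !lee_fin => H1 H2; exists r; rewrite H1 H2.
Qed.

Lemma powle (y : R) (q : nat) : (2 < q)%N -> 0 <= y -> y <= 1 -> y ^+ q <= y ^+ 2 * y.
Proof.
move=> q2 y0 y1.
have -> : q = (2 + (q - 3).+1)%N by rewrite add2n -addn3 subnK.
rewrite exprD; apply: ler_wpM2l; first by apply: sqr_ge0.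
rewrite exprS; have H1 : y ^+ (q - 3) <= 1 by apply: exprn_ile1.
rewrite -[X in _ <= X]mulr1; by apply: ler_wpM2l.
Qed.

Lemma lemP (K : R) (q : nat) : (2 < q)%N -> 0 < K ->
  exists2 rho : R, 0 < rho & forall y, 0 < y < rho -> K * y ^+ q <= y ^+ 2 / 4.
Proof.
move=> q2 K0.
pose rho := Num.min 1 (1 / (4 * K)).
have rho0 : 0 < rho by rewrite lt_min ltr01 /=; apply: divr_gt0; lra.
exists rho => // y /andP[y0 yr].
have y1 : y <= 1 by apply: (le_trans (ltW yr)); rewrite ge_min lexx.
have yK : K * y <= 1 / 4.
  have : y <= 1 / (4 * K) by apply: (le_trans (ltW yr)); rewrite ge_min lexx orbT.
  rewrite ler_pdivlMr ?mulr_gt0 //; lra.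
have := ler_wpM2l (ltW K0) (powle q2 (ltW y0) y1).
have := ler_wpM2l (sqr_ge0 y) yK.
have -> : K * (y ^+ 2 * y) = y ^+ 2 * (K * y) by ring.
lra.
Qed.

End helpers.


Section parti.
Variables (R : realType) (f : R -> R).
Hypothesis f0 : f 0 = 0.
Hypothesis fconv : forall a b l : R, 0 <= a -> 0 <= b -> 0 <= l <= 1 ->
  f (l * a + (1 - l) * b) <= l * f a + (1 - l) * f b.

Lemma sup_lt1 (S : set (\bar R)) : (ereal_sup S < 1)%E ->
  exists2 a : R, a < 1 & forall x, S x -> (x <= a%:E)%E.
Proof.
have ub := @ereal_sup_ubound _ S.
case: (ereal_sup S) ub => [r| |] ub; rewrite ?lte_fin => H.
- exists ((r + 1) / 2); first lra.
  move=> x Sx; apply: le_trans (ub _ Sx) _; rewrite lee_fin; lra.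
- by [].
- by exists 0 => // x Sx; apply: le_trans (ub _ Sx) _; rewrite leNye.
Qed.

Lemma inf_gt1 (S : set (\bar R)) : (1 < ereal_inf S)%E ->
  exists2 c : R, 1 < c & forall x, S x -> (c%:E <= x)%E.
Proof.
have lb := @ereal_inf_lbound _ S.
case: (ereal_inf S) lb => [r| |] lb; rewrite ?lte_fin => H.
- exists ((r + 1) / 2); first lra.
  move=> x Sx; apply: le_trans (lb _ Sx); rewrite lee_fin; lra.
- exists 2; first lra.
  by move=> x Sx; apply: le_trans (lb _ Sx); rewrite leey.
- by [].
Qed.

Lemma parti :
  (forall eps : R, 0 < eps ->
      (ereal_sup [set (f t / (t ^+ 2 / 2))%:E
                  | t in `[eps, +oo[%classic] < 1)%E)
   <->
   (forall eps : R, 0 < eps ->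
      (1 < ereal_inf [set (Irate f s * (s ^+ 2 / 2)^-1%:E)%E
                      | s in `[eps, +oo[%classic])%E).
Proof.
split=> H eps eps0.
- have [a a1 Ha] := sup_lt1 (H eps eps0).
  apply: (@lt_le_trans _ _ (2 - a)%:E); first by rewrite lte_fin; lra.
  apply: le_ereal_inf_tmp => _ [s /= + <-]; rewrite in_itv /= andbT => es.
  have s0 : 0 < s by apply: lt_le_trans es.
  have k0 : 0 < s ^+ 2 / 2 by apply: divr_gt0 => //; apply: exprn_gt0.
  have : ((f s / (s ^+ 2 / 2))%:E <= a%:E)%E by apply: Ha; exists s => //=; rewrite in_itv /= es.
  rewrite lee_fin ler_pdivrMr // => fs.
  have : (((2 - a) * (s ^+ 2 / 2))%:E <= Irate f s)%E.
    apply: le_trans (I_ge f s (ltW s0)); rewrite lee_fin.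
    have -> : s * s = s ^+ 2 by rewrite expr2.
    lra.
  have k0' : 0 < (s ^+ 2 / 2)^-1 by rewrite invr_gt0.
  move=> /(@lee_wpmul2r _ ((s ^+ 2 / 2)^-1)%:E); rewrite lee_fin (ltW k0') => /(_ isT).
  by rewrite -EFinM mulfK // lt0r_neq0.
- pose e' := eps / 4.
  have e'0 : 0 < e' by rewrite /e'; lra.
  have [c c1 Hc] := inf_gt1 (H e' e'0).
  pose b := Num.max (1 / 2) c^-1.
  have b1 : b < 1.
    rewrite /b gt_max; apply/andP; split; first lra.
    by rewrite invf_lt1 //; lra.
  apply: (@le_lt_trans _ _ b%:E); last by rewrite lte_fin.
  apply: ge_ereal_sup => _ [t /= + <-]; rewrite in_itv /= andbT => et.
  have t0 : 0 < t by apply: lt_le_trans et.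
  have k0 : 0 < t ^+ 2 / 2 by apply: divr_gt0 => //; apply: exprn_gt0.
  rewrite lee_fin ler_pdivrMr //.
  have [s Hs] := subgrad fconv t0.
  have Is := I_subgrad (ltW t0) Hs.
  have Ige := I_ge0 f0 s; rewrite Is lee_fin in Ige.
  have [se|es] := ltP s e'.
    have : f t <= 1 / 2 * (t ^+ 2 / 2).
      rewrite expr2 /e' in et se *.
      have : s * t <= eps / 4 * t by apply: ler_wpM2r; lra.
      have : eps / 4 * t <= t / 4 * t by apply: ler_wpM2r; lra.
      lra.
    move=> H1; apply: le_trans H1 _; apply: ler_wpM2r; first lra.
    by rewrite /b le_max lexx.
  have s0 : 0 < s by apply: lt_le_trans es.
  have ks : 0 < s ^+ 2 / 2 by apply: divr_gt0 => //; apply: exprn_gt0.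
  have : (c%:E <= Irate f s * ((s ^+ 2 / 2)^-1)%:E)%E.
    by apply: Hc; exists s => //=; rewrite in_itv /= es.
  rewrite Is -EFinM lee_fin -/(_ / _) ler_pdivlMr // => Hcs.
  have : f t <= c^-1 * (t ^+ 2 / 2).
    rewrite -(ler_pM2l (lt_trans ltr01 c1)) mulrA mulfV ?mul1r; last first.
      by rewrite lt0r_neq0 // (lt_trans ltr01 c1).
    have := sqr_ge0 (t - c * s).
    rewrite !expr2 in Hcs *; nra.
  move=> H1; apply: le_trans H1 _; apply: ler_wpM2r; first lra.
  by rewrite /b le_max lexx orbT.
Qed.

End parti.


Lemma partii_1 (R : realType) (f : R -> R) (f0 : f 0 = 0)
  (fconv : forall a b l : R, 0 <= a -> 0 <= b -> 0 <= l <= 1 ->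
     f (l * a + (1 - l) * b) <= l * f a + (1 - l) * f b)
  (q : nat) (kappa : R) (q3 : (3 <= q)%N) (k0 : 0 < kappa) :
  (forall e : R, 0 < e -> exists2 delta : R, 0 < delta &
        forall t : R, 0 < t < delta ->
          `| f t - (t ^+ 2 / 2 - kappa * t ^+ q) | <= e * t ^+ q) ->
  (forall e : R, 0 < e -> exists2 delta : R, 0 < delta &
        forall s : R, 0 < s < delta ->
          (`| Irate f s - (s ^+ 2 / 2 + kappa * s ^+ q)%:E | <=
             (e * s ^+ q)%:E)%E).
Proof.
move=> H e e0.
have e20 : 0 < e / 2 by lra.
have [d1 d10 Hd1] := H _ e20; clear H.
pose K := kappa + e / 2.
have K0 : 0 < K by rewrite /K; lra.
have [rho [rho0 rho1] HQ] := lemQ q3 K0 e20.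
have [rP rP0 HP] := lemP q3 K0.
have flo t : 0 < t < d1 -> t ^+ 2 / 2 - K * t ^+ q <= f t.
  move=> /Hd1; rewrite ler_norml /K => /andP[H1 _]; lra.
have fhi t : 0 < t < d1 -> f t <= t ^+ 2 / 2 - kappa * t ^+ q + e / 2 * t ^+ q.
  move=> /Hd1; rewrite ler_norml => /andP[_ H1]; lra.
pose t1 := Num.min d1 (Num.min rho rP) / 2.
have mpos : 0 < Num.min d1 (Num.min rho rP) by rewrite !lt_min d10 rho0 rP0.
have t10 : 0 < t1 by rewrite /t1; lra.
have t1d : t1 < d1.
  have : Num.min d1 (Num.min rho rP) <= d1 by rewrite ge_min lexx.
  rewrite /t1; lra.
have t1r : t1 < rho.
  have : Num.min d1 (Num.min rho rP) <= rho by rewrite !ge_min lexx orbT.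
  rewrite /t1; lra.
have t1P : t1 < rP.
  have : Num.min d1 (Num.min rho rP) <= rP by rewrite !ge_min lexx !orbT.
  rewrite /t1; lra.
have ft1 : t1 ^+ 2 / 4 <= f t1.
  have := flo t1; rewrite t10 t1d => /(_ isT).
  have := HP t1; rewrite t10 t1P => /(_ isT).
  lra.
pose m := f t1 / t1.
have m0 : 0 < m.
  rewrite /m; apply: divr_gt0 => //; apply: lt_le_trans ft1.
  by apply: divr_gt0; [apply: exprn_gt0 | lra].
exists (Num.min (Num.min d1 rho) m).
  by rewrite !lt_min d10 rho0 m0.
move=> s /andP[s0]; rewrite !lt_min => /andP[/andP[sd1 sr] sm].
have sq0 : 0 <= s ^+ q by apply: exprn_ge0; lra.
have lo : (((s ^+ 2 / 2 + kappa * s ^+ q) - e / 2 * s ^+ q)%:E <= Irate f s)%E.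
  apply: le_trans (I_ge f s (ltW s0)); rewrite lee_fin.
  have := fhi s; rewrite s0 sd1 => /(_ isT).
  rewrite -expr2; lra.
have hi : (Irate f s <= ((s ^+ 2 / 2 + kappa * s ^+ q) + e * s ^+ q)%:E)%E.
  apply: I_le => t t0; rewrite lee_fin.
  have [tt1|t1t] := ltP t t1.
    have [->|tpos] := eqVneq t 0.
      rewrite mulr0 f0 subr0.
      have : 0 <= s ^+ 2 / 2 by apply: divr_ge0 => //; apply: sqr_ge0.
      have : 0 <= kappa * s ^+ q by apply: mulr_ge0; lra.
      have : 0 <= e * s ^+ q by apply: mulr_ge0; lra.
      lra.
    have tp : 0 < t by rewrite lt0r tpos.
    have := flo t; rewrite tp (lt_trans tt1 t1d) => /(_ isT) => Hf.
    have := HQ s t; rewrite s0 sr t0 (lt_trans tt1 t1r) => /(_ isT isT) => Hq.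
    have idn : s * t - s ^+ 2 / 2 = t ^+ 2 / 2 - (t - s) ^+ 2 / 2 by field.
    rewrite /K in Hf Hq; lra.
  have Hr := ratio f0 fconv t10 t1t.
  have : m * t <= f t.
    by rewrite /m mulrAC ler_pdivrMr.
  have : s * t <= m * t by apply: ler_wpM2r; lra.
  have : 0 <= s ^+ 2 / 2 by apply: divr_ge0 => //; apply: sqr_ge0.
  have : 0 <= kappa * s ^+ q by apply: mulr_ge0; lra.
  have : 0 <= e * s ^+ q by apply: mulr_ge0; lra.
  lra.
have [r [-> /andP[r1 r2]]] := bnds_fin lo hi.
rewrite -EFinB abse_EFin lee_fin ler_norml.
have : 0 <= e * s ^+ q by apply: mulr_ge0; lra.
lra.
Qed.


Lemma partii_2 (R : realType) (f : R -> R) (f0 : f 0 = 0)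
  (fconv : forall a b l : R, 0 <= a -> 0 <= b -> 0 <= l <= 1 ->
     f (l * a + (1 - l) * b) <= l * f a + (1 - l) * f b)
  (q : nat) (kappa : R) (q3 : (3 <= q)%N) (k0 : 0 < kappa) :
  (forall e : R, 0 < e -> exists2 delta : R, 0 < delta &
        forall s : R, 0 < s < delta ->
          (`| Irate f s - (s ^+ 2 / 2 + kappa * s ^+ q)%:E | <=
             (e * s ^+ q)%:E)%E) ->
  (forall e : R, 0 < e -> exists2 delta : R, 0 < delta &
        forall t : R, 0 < t < delta ->
          `| f t - (t ^+ 2 / 2 - kappa * t ^+ q) | <= e * t ^+ q).
Proof.
move=> H e e0.
pose e1 := Num.min e (kappa / 2).
have e10 : 0 < e1 by rewrite lt_min e0 /=; lra.
have e1e : e1 <= e by rewrite ge_min lexx.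
have e1k : e1 <= kappa / 2 by rewrite ge_min lexx orbT.
have e120 : 0 < e1 / 2 by lra.
have [dI dI0 HdI] := H _ e120; clear H.
have Ib s : 0 < s < dI -> exists r, Irate f s = r%:E /\
    s ^+ 2 / 2 + kappa * s ^+ q - e1 / 2 * s ^+ q <= r <=
    s ^+ 2 / 2 + kappa * s ^+ q + e1 / 2 * s ^+ q.
  move=> /HdI /absE_fin [r [-> Hr]]; exists r; split => //.
  by move: Hr; rewrite ler_norml; lra.
pose K := kappa - e1.
have K0 : 0 < K by rewrite /K; lra.
have [rho [rho0 rho1] HQ] := lemQ q3 K0 e120.
have k20 : 0 < 2 * kappa by lra.
have [rP rP0 HP] := lemP q3 k20.
have flo t : 0 < t < dI -> t ^+ 2 / 2 - kappa * t ^+ q - e1 / 2 * t ^+ q <= f t.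
  move=> tt; have [r [Ir /andP[_ r2]]] := Ib t tt; case/andP: tt => t0 _.
  have := I_ge f t (ltW t0); rewrite Ir lee_fin -expr2; lra.
pose ds := Num.min dI rho.
have ds0 : 0 < ds by rewrite lt_min dI0 rho0.
have dsI : ds <= dI by rewrite ge_min lexx.
have dsr : ds <= rho by rewrite ge_min lexx orbT.
pose m0 := (ds / 2) ^+ 2 / 2.
have m00 : 0 < m0 by rewrite /m0; apply: divr_gt0 => //; apply: exprn_gt0; lra.
pose C := 2 * `|f 1| + 1.
have C0 : 0 < C by rewrite /C; have := normr_ge0 (f 1); lra.
exists (Num.min (Num.min dI rP) (Num.min (1 / 2) (Num.min rho (m0 / C)))).
  have mc : 0 < m0 / C by apply: divr_gt0.
  rewrite !lt_min dI0 rP0 rho0 mc /=; lra.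
move=> t /andP[t0]; rewrite !lt_min => /andP[/andP[tI tP] /andP[th /andP[tr tm]]].
have tq0 : 0 <= t ^+ q by apply: exprn_ge0; lra.
have Hlo := flo t; rewrite t0 tI in Hlo; have {}Hlo := Hlo isT.
have ft4 : t ^+ 2 / 4 <= f t.
  have := HP t; rewrite t0 tP => /(_ isT).
  have : e1 / 2 * t ^+ q <= kappa * t ^+ q by apply: ler_wpM2r; lra.
  lra.
have t20 : 0 < t ^+ 2 / 4 by apply: divr_gt0; [apply: exprn_gt0 | lra].
have [s Hs] := subgrad fconv t0.
have Is := I_subgrad (ltW t0) Hs.
have h0 := Hs 0 (lexx 0); rewrite f0 in h0.
have s0 : 0 < s.
  have : 0 < s * t by lra.
  by rewrite pmulr_lgt0.
have h1 := Hs 1 ler01.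
have sC : s <= C.
  have : 0 <= s * (1 / 2 - t) by apply: mulr_ge0; lra.
  have := ler_norm (f 1).
  rewrite /C; lra.
have sds : s < ds.
  rewrite ltNge; apply/negP => dss.
  have hds : 0 < ds / 2 < dI by apply/andP; split; lra.
  have [r0 [Ir0 /andP[r01 _]]] := Ib _ hds.
  have hds2 : ds / 2 < ds by lra.
  have := I_homo f (ltW (lt_le_trans hds2 dss)).
  rewrite Ir0 Is lee_fin => Hm.
  have : 0 <= (kappa - e1 / 2) * (ds / 2) ^+ q.
    by apply: mulr_ge0; [lra | apply: exprn_ge0; lra].
  have : s * t <= C * t by apply: ler_wpM2r; lra.
  have : t * C < m0 by rewrite -ltr_pdivlMr.
  rewrite /m0; lra.
have hs : 0 < s < dI by apply/andP; split; lra.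
have [r [Ir /andP[r1 _]]] := Ib s hs.
rewrite Is in Ir; case: Ir => Ir.
have := HQ s t; rewrite s0 (lt_le_trans sds dsr) (ltW t0) tr => /(_ isT isT) Hq.
have idn : s * t - s ^+ 2 / 2 = t ^+ 2 / 2 - (t - s) ^+ 2 / 2 by field.
have : e1 * t ^+ q <= e * t ^+ q by apply: ler_wpM2r.
move=> He; rewrite /K in Hq; rewrite ler_norml; apply/andP; split; lra.
Qed.


Lemma expR_conv (R : realType) (u v l : R) : 0 <= l <= 1 ->
  expR (l * u + (1 - l) * v) <= l * expR u + (1 - l) * expR v.
Proof.
move=> /andP[l0 l1].
set w := l * u + (1 - l) * v.
have Hu : expR w * (1 + (u - w)) <= expR u.
  have h1 := expR_ge1Dx (u - w); have h2 := expR_ge0 w.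
  have -> : expR u = expR w * expR (u - w) by rewrite -expRD addrC subrK.
  exact: ler_wpM2l.
have Hv : expR w * (1 + (v - w)) <= expR v.
  have h1 := expR_ge1Dx (v - w); have h2 := expR_ge0 w.
  have -> : expR v = expR w * expR (v - w) by rewrite -expRD addrC subrK.
  exact: ler_wpM2l.
have e0 := expR_ge0 w.
have H1 := ler_wpM2l l0 Hu.
have H2 : (1 - l) * (expR w * (1 + (v - w))) <= (1 - l) * expR v.
  by apply: ler_wpM2l; lra.
have -> : expR w = l * (expR w * (1 + (u - w))) + (1 - l) * (expR w * (1 + (v - w))).
  rewrite /w; ring.
lra.
Qed.

Section prob.
Context d (T : measurableType d) (R : realType) (P : probability T R)
  (X : {RV P >-> R}).

Definition gX (c : R) := fun x => expR (c * X x).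

Lemma mgX c : measurable_fun [set: T] (fun x => (gX c x)%:E).
Proof.
apply/measurable_EFinP; apply: measurableT_comp; first exact: measurable_expR.
exact: (measurable_realfun.measurable_funM (measurable_cst c) (measurable_funPT X)).
Qed.

Lemma MgX c : ('M_P X c = \int[P]_x (gX c x)%:E)%E.
Proof. by rewrite /mmt_gen_fun unlock; apply: eq_integral => x _ /=; rewrite /gX mulrC. Qed.

Lemma M_neq0 c : 'M_P X c != 0%E.
Proof.
apply/negP => /eqP H.
have : (\int[P]_(x in setT) `|(gX c x)%:E| = 0)%E.
  rewrite -H MgX; apply: eq_integral => x _.
  by rewrite abse_EFin ger0_norm // expR_ge0.
move/(ae_eq_integral_abs P measurableT (mgX c)) => [N [mN [PN sub]]].
have sN : setT `<=` N.
  move=> x _; apply: sub => /= h; case: (h I) => /eqP.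
  by rewrite gt_eqF // expR_gt0.
have := @le_measure _ _ _ P setT N; rewrite !inE => /(_ measurableT mN sN).
move=> h; have h1 : P setT = 1%E by apply: probability_setT.
have hN : (P N <= 0)%E by rewrite PN.
have h0 : (P [set: T] <= 0)%E by apply: le_trans h hN.
by move: h0; rewrite h1 lee_fin ler10.
Qed.

Lemma M_ge0 c : (0 <= 'M_P X c)%E.
Proof.
rewrite MgX; apply: integral_ge0 => x _; rewrite lee_fin; exact: expR_ge0.
Qed.

Lemma M_fin c : ('M_P X c < +oo)%E ->
  exists2 A : R, 0 < A & 'M_P X c = A%:E.
Proof.
move=> Mlt; have := M_ge0 c; have := M_neq0 c.
case: ('M_P X c) Mlt => [r| |] //= _ r0; rewrite lee_fin => r1.
by exists r => //; rewrite lt0r r1 andbT; apply: contra r0 => /eqP ->.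
Qed.

Lemma cgf0 : cgf P X 0 = 0.
Proof.
rewrite /cgf /mmt_gen_fun.
have -> : (expR \o 0 \o* X) = cst 1.
  by apply/funext => x /=; rewrite mulr0 expR0.
by rewrite expectation_cst /= ln1.
Qed.

Lemma cgf_conv (Mfin : forall t, 0 <= t -> ('M_P X t < +oo)%E)
  (a b l : R) : 0 <= a -> 0 <= b -> 0 <= l <= 1 ->
  cgf P X (l * a + (1 - l) * b) <= l * cgf P X a + (1 - l) * cgf P X b.
Proof.
move=> a0 b0 /andP[l0 l1].
have [A A0 MA] := M_fin (Mfin _ a0).
have [B B0 MB] := M_fin (Mfin _ b0).
set m := l * a + (1 - l) * b.
have m0 : 0 <= m by rewrite /m; apply: addr_ge0; apply: mulr_ge0; lra.
have [Mm Mm0 MM] := M_fin (Mfin _ m0).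
rewrite /cgf MA MB MM /=.
set Cc := expR (l * ln A + (1 - l) * ln B).
have pw x : gX m x <= Cc * l / A * gX a x + Cc * (1 - l) / B * gX b x.
  rewrite /gX.
  set u := a * X x - ln A; set v := b * X x - ln B.
  have eu : expR u = expR (a * X x) / A by rewrite /u expRD expRN lnK // posrE.
  have ev : expR v = expR (b * X x) / B by rewrite /v expRD expRN lnK // posrE.
  have -> : m * X x = (l * u + (1 - l) * v) + (l * ln A + (1 - l) * ln B).
    by rewrite /m /u /v; ring.
  rewrite expRD -/Cc.
  have := expR_conv u v (introT andP (conj l0 l1)).
  rewrite eu ev => H.
  have C0 : 0 <= Cc by exact: expR_ge0.
  have := ler_wpM2r C0 H.
  move=> H2; apply: (le_trans H2); rewrite le_eqVlt; apply/orP; left; apply/eqP.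
  by rewrite /Cc; field; rewrite !lt0r_neq0.
have : (Mm%:E <= (Cc * l / A)%:E * A%:E + (Cc * (1 - l) / B)%:E * B%:E)%E.
  rewrite -MM -MA -MB !MgX.
  have c1 : 0 <= Cc * l / A by apply: divr_ge0; [apply: mulr_ge0; [exact: expR_ge0|]|lra].
  have c2 : 0 <= Cc * (1 - l) / B.
    by apply: divr_ge0; [apply: mulr_ge0; [exact: expR_ge0|lra]|lra].
  rewrite -!ge0_integralZl_EFin //; last 4 first.
  - by move=> x _; rewrite lee_fin expR_ge0.
  - exact: mgX.
  - by move=> x _; rewrite lee_fin expR_ge0.
  - exact: mgX.
  rewrite -ge0_integralD //; last 4 first.
  - by move=> x _; rewrite -EFinM lee_fin; apply: mulr_ge0 => //; exact: expR_ge0.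
  - by apply: emeasurable_funM => //; exact: mgX.
  - by move=> x _; rewrite -EFinM lee_fin; apply: mulr_ge0 => //; exact: expR_ge0.
  - by apply: emeasurable_funM => //; exact: mgX.
  apply: ge0_le_integral => //.
  - by move=> x _; rewrite lee_fin expR_ge0.
  - exact: mgX.
  - by apply: emeasurable_funD; apply: emeasurable_funM => //; exact: mgX.
  - by move=> x _; rewrite -!EFinM -EFinD lee_fin pw.
rewrite -!EFinM -EFinD lee_fin.
have -> : Cc * l / A * A + Cc * (1 - l) / B * B = Cc.
  by field; rewrite !lt0r_neq0.
move=> H.
have -> : l * ln A + (1 - l) * ln B = ln Cc by rewrite /Cc expRK.
by rewrite ler_ln // posrE // expR_gt0.
Qed.

End prob.

Theorem proposition4p1 (d : measure_display) (T : measurableType d)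
  (R : realType) (P : probability T R) (X : {RV P >-> R}) (sigma0 : R) :
  ('E_P[X] = 0)%E ->
  ('V_P[X] = 1)%E ->
  0 < sigma0 ->
  (forall t : R, - sigma0 <= t -> ('M_P X t < +oo)%E) ->
  (* (i) *)
  ((forall eps : R, 0 < eps ->
      (ereal_sup [set (cgf P X t / (t ^+ 2 / 2))%:E
                  | t in `[eps, +oo[%classic] < 1)%E)
   <->
   (forall eps : R, 0 < eps ->
      (1 < ereal_inf [set (rate P X s * (s ^+ 2 / 2)^-1%:E)%E
                      | s in `[eps, +oo[%classic])%E))
  /\
  (* (ii) *)
  (forall (q : nat) (kappa : R), (3 <= q)%N -> 0 < kappa ->
     (forall e : R, 0 < e -> exists2 delta : R, 0 < delta &
        forall t : R, 0 < t < delta ->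
          `| cgf P X t - (t ^+ 2 / 2 - kappa * t ^+ q) | <= e * t ^+ q)
     <->
     (forall e : R, 0 < e -> exists2 delta : R, 0 < delta &
        forall s : R, 0 < s < delta ->
          (`| rate P X s - (s ^+ 2 / 2 + kappa * s ^+ q)%:E | <=
             (e * s ^+ q)%:E)%E)).
Proof.
move=> _ _ s0 Mfin.
have Mfin' t : 0 <= t -> ('M_P X t < +oo)%E.
  by move=> t0; apply: Mfin; apply: le_trans t0; rewrite oppr_le0 ltW.
have f0 := cgf0 X.
have fconv := cgf_conv Mfin'.
split; first exact: (parti f0 fconv).
move=> q kappa q3 k0; split; [exact: partii_1 | exact: partii_2].
Qed.
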